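(* Let $(X,\rho,\mu)$ be a $K$-doubling metric measure space. There exists $\delta=\delta(K)>0$ such that: (1) if $x,y\in X$, $\eta>0$, $B_x$ is $(\delta,\eta)$-full at $x$, $B_y$ is $(\delta,\eta)$-full at $y$, and $0<t=\rho(x,y)<\eta/3$, then $\mu\big(B_{3t}(x)\cap B_x\cap B_{3t}(y)\cap B_y\big)>0$; (2) let $E\subseteq X$ be nonempty and $x$ a $\mu$-interior point of the closure $\overline E$; for every $y\in E$ let $B_y$ be a $\mu$-measurable set, and assume there is $\xi>0$ such that for every $z\in\overline E\setminus\{x\}$ with $\rho(z,x)<\xi$ there exist $l,\eta>0$ such that $B_y$ is $(\delta,\eta)$-full at $y$ for every $y\in E\cap B_l(z)$. Then there exist a $\mu$-neighborhood $U$ of $x$ and a map $r_x\colon U\to E$ such that $y\in B_{r_x(y)}$ for every $y\in U\setminus\{x\}$.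
   Context: A $K$-doubling metric measure space ($K>0$) is a triple $(X,\rho,\mu)$ where $(X,\rho)$ is a complete separable metric space and $\mu$ is a Borel-regular outer measure on $X$ with $0<\mu(B_{2r}(x))\le K\mu(B_r(x))<+\infty$ for all $x\in X$, $r>0$. A point $x\in E$ is a $\mu$-interior point of $E$ if there is a Borel set $B\subseteq E$ with $\lim_{r\to0^+}\mu(B_r(x)\setminus B)/\mu(B_r(x))=0$, and then $E$ is a $\mu$-neighborhood of $x$. For $\delta,\eta>0$, a $\mu$-measurable set $B$ containing $y$ is $(\delta,\eta)$-full at $y$ if $\sup_{0<r<\eta}\mu(B_r(y)\setminus B)/\mu(B_r(y))\le\delta$. *)

(* Defs.v *)
From HB Require Import structures.
From mathcomp Require Import all_boot all_order all_algebra.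
From mathcomp Require Import all_classical all_reals all_analysis.

Set Implicit Arguments.
Unset Strict Implicit.
Unset Printing Implicit Defensive.
Import Order.TTheory GRing.Theory Num.Theory numFieldNormedType.Exports.
Local Open Scope classical_set_scope.
Local Open Scope ring_scope.

Section MetricMeasure.
Variables (R : realType) (X : Type) (rho : X -> X -> R).

Definition is_metric : Prop :=
  [/\ (forall x y, 0 <= rho x y),
      (forall x y, rho x y = 0 <-> x = y),
      (forall x y, rho x y = rho y x) &
      (forall x y z, rho x z <= rho x y + rho y z)].

Definition mball (x : X) (r : R) : set X := [set y | rho x y < r].

Definition cauchy_seq (u : nat -> X) : Prop :=
  forall e : R, 0 < e -> exists N : nat, forall m n : nat,
    (N <= m)%N -> (N <= n)%N -> rho (u m) (u n) < e.

Definition converges_to (u : nat -> X) (l : X) : Prop :=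
  forall e : R, 0 < e -> exists N : nat, forall n : nat, (N <= n)%N -> rho (u n) l < e.

Definition metric_complete : Prop :=
  forall u : nat -> X, cauchy_seq u -> exists l, converges_to u l.

Definition metric_separable : Prop :=
  exists D : set X, countable D /\
    forall x (r : R), 0 < r -> exists2 d, D d & rho x d < r.

Definition metric_open (A : set X) : Prop :=
  forall x, A x -> exists2 r : R, 0 < r & mball x r `<=` A.

Definition borel_set (A : set X) : Prop := <<s metric_open >> A.

Definition metric_closure (E : set X) : set X :=
  [set z | forall r : R, 0 < r -> exists2 e, E e & rho z e < r].

Variable mu : {outer_measure set X -> \bar R}.

Definition mu_measurable (A : set X) : Prop := mu.-caratheodory A.

Definition borel_regular : Prop :=
  (forall A, borel_set A -> mu_measurable A) /\
  (forall A, exists B, [/\ borel_set B, A `<=` B & mu B = mu A]).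

Definition doubling_mms (K : R) : Prop :=
  [/\ 0 < K, is_metric, metric_complete /\ metric_separable, borel_regular &
      forall x (r : R), 0 < r ->
        [/\ (0 < mu (mball x r))%E,
            (mu (mball x (2 * r)) <= K%:E * mu (mball x r))%E &
            (mu (mball x r) < +oo)%E] ].

(** the ratio mu(B_r(x) \ B) / mu(B_r(x)) (both finite in a doubling space) *)
Definition density_ratio (B : set X) (x : X) (r : R) : R :=
  fine (mu (mball x r `\` B)) / fine (mu (mball x r)).

Definition mu_interior_point (E : set X) (x : X) : Prop :=
  E x /\ exists B : set X, [/\ borel_set B, B `<=` E &
    density_ratio B x r @[r --> (0:R)^'+] --> (0:R)].

Definition mu_neighborhood (U : set X) (x : X) : Prop := mu_interior_point U x.

Definition full_at (delta eta : R) (B : set X) (y : X) : Prop :=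
  [/\ mu_measurable B, B y &
      forall r : R, 0 < r < eta -> density_ratio B y r <= delta].

End MetricMeasure.

(* Main.v *)
Require Import Defs.
From HB Require Import structures.
From mathcomp Require Import all_boot all_order all_algebra.
From mathcomp Require Import all_classical all_reals all_analysis.
From mathcomp Require Import ring lra.
Import Order.TTheory GRing.Theory Num.Theory.
Local Open Scope classical_set_scope.
Local Open Scope ring_scope.

Definition PX (X : Type) (x0 : X) : Type := X.
Section PXinst. Variables (X : Type) (x0 : X).
HB.instance Definition _ := gen_eqMixin (@PX X x0).
HB.instance Definition _ := gen_choiceMixin (@PX X x0).
HB.instance Definition _ := isPointed.Build (@PX X x0) x0.
End PXinst.

Lemma dec_cont (R : realType) (X : Type) (x0 : X) (mu : {outer_measure set X -> \bar R})
  (F : nat -> set X) (e : R) : 0 < e ->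
  (forall n, mu.-caratheodory (F n)) -> (forall n, F n.+1 `<=` F n) ->
  (mu (F 0%N) < +oo)%E -> exists N, (mu (F N) < mu (\bigcap_n F n) + e%:E)%E.
Proof.
move=> e0 h2 h3 h1.
pose T : pointedType := @PX X x0.
pose mu' : {outer_measure set T -> \bar R} := mu.
pose nu : {measure set (caratheodory_type mu') -> \bar R} := mu'.
have hc : (fun n => mu (F n)) @ \oo --> mu (\bigcap_n F n).
  have := @nonincreasing_cvg_mu _ (caratheodory_type mu') R nu F h1 h2.
  apply; first by apply: bigcap_measurableType => k _; exact: h2.
  by apply/nonincreasing_seqP => n; apply/subsetPset; exact: h3.
have lfin : mu (\bigcap_n F n) \is a fin_num.
  rewrite ge0_fin_numE ?outer_measure_ge0 //.
  apply: le_lt_trans h1; apply: le_outer_measure; exact: bigcap_inf.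
have lt : (mu (\bigcap_n F n) < mu (\bigcap_n F n) + e%:E)%E.
  by rewrite -(fineK lfin) -EFinD lte_fin ltrDl.
have := hc _ (open_ereal_lt' lt).
case=> N _ hN; exists N; exact: (hN N (leqnn N)).
Qed.

Section Main.
Variables (R : realType) (X : Type) (rho : X -> X -> R)
  (mu : {outer_measure set X -> \bar R}) (K : R).
Hypotheses (Kpos : 0 < K) (hmet : is_metric rho) (hreg : borel_regular rho mu)
  (hdb : forall x (r : R), 0 < r ->
        [/\ (0 < mu (mball rho x r))%E,
            (mu (mball rho x (2 * r)) <= K%:E * mu (mball rho x r))%E &
            (mu (mball rho x r) < +oo)%E]).

Local Notation ball := (mball rho).

Lemma rho_ge0 x y : 0 <= rho x y.
Proof. by case: hmet. Qed.
Lemma rho_sym x y : rho x y = rho y x.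
Proof. by case: hmet. Qed.
Lemma rho_tri x y z : rho x z <= rho x y + rho y z.
Proof. by case: hmet. Qed.
Lemma rho_xx x : rho x x = 0.
Proof. by case: hmet => _ h _ _; exact: (proj2 (h x x)). Qed.
Lemma rho_eq0 x y : rho x y = 0 -> x = y.
Proof. by case: hmet => _ h _ _; exact: (proj1 (h x y)). Qed.

Lemma ball_sub x y r r' : rho x y + r <= r' -> ball y r `<=` ball x r'.
Proof.
move=> h z; rewrite /mball /= => hz.
apply: (le_lt_trans (rho_tri x y z)); apply: (lt_le_trans _ h); by rewrite ltrD2l.
Qed.

Lemma ball_le x r r' : r <= r' -> ball x r `<=` ball x r'.
Proof. by move=> h; apply: ball_sub; rewrite rho_xx add0r. Qed.

Lemma ball_center x r : 0 < r -> ball x r x.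
Proof. by rewrite /mball /= rho_xx. Qed.

Lemma mu_ball_fin x r : (mu (ball x r) < +oo)%E.
Proof.
case: (ltP 0 r) => hr; first by case: (hdb x r hr).
have -> : ball x r = set0.
  apply/seteqP; split=> // z; rewrite /mball /= => hz.
  by have := le_lt_trans (rho_ge0 x z) (lt_le_trans hz hr); rewrite ltxx.
by rewrite outer_measure0.
Qed.

Lemma mu_fin A x r : A `<=` ball x r -> (mu A < +oo)%E.
Proof. move=> h; exact: (le_lt_trans (le_outer_measure mu _ _ h) (mu_ball_fin x r)). Qed.

Lemma mu_finE A x r : A `<=` ball x r -> mu A = (fine (mu A))%:E.
Proof.
move=> h; rewrite fineK // ge0_fin_numE ?outer_measure_ge0 //; exact: (mu_fin _ _ _ h).
Qed.

Lemma ratio_le d B y r : 0 < r -> density_ratio rho mu B y r <= d ->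
  (mu (ball y r `\` B) <= d%:E * mu (ball y r))%E.
Proof.
move=> r0; rewrite /density_ratio.
have [h1 _ _] := hdb y r r0.
have hs : ball y r `\` B `<=` ball y r by move=> z [].
rewrite (mu_finE _ _ _ hs) (mu_finE _ _ _ (@subset_refl _ (ball y r))).
rewrite (mu_finE _ _ _ (@subset_refl _ (ball y r))) lte_fin in h1.
by rewrite ler_pdivrMr // -EFinM lee_fin.
Qed.

Lemma dbl x r : 0 < r -> (mu (ball x (2 * r)) <= K%:E * mu (ball x r))%E.
Proof. by move=> h; case: (hdb x r h). Qed.

Lemma dbl_iter x r p : 0 < r ->
  (mu (ball x (2 ^+ p * r)) <= (K ^+ p)%:E * mu (ball x r))%E.
Proof.
move=> r0; elim: p => [|p IH]; first by rewrite !expr0 mul1r mul1e.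
rewrite exprS -mulrA.
have h : 0 < 2 ^+ p * r by rewrite mulr_gt0 // exprn_gt0.
apply: (le_trans (dbl x _ h)).
rewrite exprS EFinM -muleA; apply: lee_wpmul2l => //; by rewrite lee_fin ltW.
Qed.


Lemma part1 d x y eta Bx By : 0 <= d -> d * (1 + K) < 1 ->
  full_at rho mu d eta Bx x -> full_at rho mu d eta By y ->
  0 < rho x y -> rho x y < eta / 3 ->
  (0 < mu (ball x (3 * rho x y) `&` Bx `&` ball y (3 * rho x y) `&` By))%E.
Proof.
move=> d0 dK [_ _ fx] [_ _ fy] t0 teta.
set t := rho x y in t0 teta *.
have eta3 : 3 * t < eta by rewrite -ltr_pdivlMl // mulrC.
pose S := ball x (2 * t).
have t20 : 0 < 2 * t by rewrite mulr_gt0.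
have hS : S `<=` ball x (2 * t) by [].
have hT : S `&` Bx `&` By `<=`
    ball x (3 * t) `&` Bx `&` ball y (3 * t) `&` By.
  move=> z [[Sz Bxz] Byz].
  have h1 : ball x (3 * t) z by apply: (ball_le x (2 * t)) => //; lra.
  have h2 : ball y (3 * t) z by apply: (ball_sub y x) Sz; rewrite rho_sym -/t; lra.
  by [].
apply: (lt_le_trans _ (le_outer_measure mu _ _ hT)).
have h1 : (mu (S `\` Bx) <= d%:E * mu S)%E.
  apply: ratio_le => //; apply: fx; rewrite t20 /=; lra.
have h2 : (mu (S `\` By) <= d%:E * (K%:E * mu S))%E.
  have sub1 : S `\` By `<=` ball y (3 * t) `\` By.
    move=> z [Sz nB]; split => //; apply: (ball_sub y x) Sz; rewrite rho_sym -/t; lra.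
  apply: (le_trans (le_outer_measure mu _ _ sub1)).
  have t30 : 0 < 3 * t by rewrite mulr_gt0.
  apply: (le_trans (ratio_le _ _ _ _ t30 (fy _ _))); first by rewrite t30.
  apply: lee_wpmul2l; first by rewrite lee_fin.
  have sub2 : ball y (3 * t) `<=` ball x (2 * (2 * t)).
    apply: ball_sub; rewrite -/t; lra.
  apply: (le_trans (le_outer_measure mu _ _ sub2)); exact: dbl.
have h3 : (mu S <= mu (S `&` Bx `&` By) + mu (S `\` Bx) + mu (S `\` By))%E.
  have sub : S `<=` (S `&` Bx `&` By) `|` (S `\` Bx) `|` (S `\` By).
    move=> z Sz; case: (pselect (Bx z)) => hx; last by left; right.
    case: (pselect (By z)) => hy; last by right.
    by left; left.
  apply: (le_trans (le_outer_measure mu _ _ sub)).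
  apply: (le_trans (outer_measureU2 _ _ _)); apply: leeD2r.
  exact: outer_measureU2.
have sa : S `&` Bx `&` By `<=` ball x (2 * t) by move=> z [[]].
have sb : S `\` Bx `<=` ball x (2 * t) by move=> z [].
have sc : S `\` By `<=` ball x (2 * t) by move=> z [].
have [Spos _ _] := hdb x (2 * t) t20.
move: h1 h2 h3 Spos.
rewrite (mu_finE _ _ _ sa) (mu_finE _ _ _ sb) (mu_finE _ _ _ sc) (mu_finE _ _ _ hS).
rewrite -!EFinM -!EFinD !lee_fin !lte_fin => h1 h2 h3 Spos.
have b0 : 0 <= fine (mu (S `&` Bx `&` By)).
  by apply: fine_ge0; exact: outer_measure_ge0.
set a := fine (mu S) in h1 h2 h3 Spos.
set b := fine (mu (S `&` Bx `&` By)) in h3 b0 *.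
set u := fine (mu (S `\` Bx)) in h1 h3.
set v := fine (mu (S `\` By)) in h2 h3.
nra.
Qed.

Definition closedm (F : set X) := metric_open rho (~` F).
Local Notation bor := (borel_set rho).
Local Notation mopen := (metric_open rho).

Lemma ball_open x r : mopen (ball x r).
Proof.
move=> y; rewrite /mball /= => hy; exists (r - rho x y); first by rewrite subr_gt0.
move=> z; rewrite /mball /= => hz.
apply: (le_lt_trans (rho_tri x y z)); rewrite -ltrBrDl //.
Qed.

Lemma bor_open A : mopen A -> bor A.
Proof. exact: sub_sigma_algebra. Qed.

Lemma bor0 : bor set0.
Proof. exact: sigma_algebra0. Qed.

Lemma borC A : bor A -> bor (~` A).
Proof. by move=> h; rewrite -setTD; exact: sigma_algebraCD. Qed.

Lemma bor_bigcup (A : nat -> set X) : (forall n, bor (A n)) -> bor (\bigcup_n A n).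
Proof. exact: sigma_algebra_bigcup. Qed.

Lemma borU A B : bor A -> bor B -> bor (A `|` B).
Proof.
move=> hA hB; rewrite -bigcup2E; apply: bor_bigcup => -[|[|n]] //=; exact: bor0.
Qed.

Lemma borI A B : bor A -> bor B -> bor (A `&` B).
Proof.
move=> hA hB; rewrite -(setCK (A `&` B)) setCI; apply: borC; apply: borU; exact: borC.
Qed.

Lemma borD A B : bor A -> bor B -> bor (A `\` B).
Proof. by move=> hA hB; rewrite setDE; apply: borI => //; exact: borC. Qed.

Lemma bor_closed F : closedm F -> bor F.
Proof. by move=> h; rewrite -(setCK F); apply: borC; exact: bor_open. Qed.

Lemma bor_ball x r : bor (ball x r).
Proof. exact: (bor_open _ (ball_open x r)). Qed.

Lemma bmeas A : bor A -> mu.-caratheodory A.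
Proof. by case: hreg => h _; exact: h. Qed.

Lemma open_bigcup (A : nat -> set X) : (forall n, mopen (A n)) -> mopen (\bigcup_n A n).
Proof.
move=> h z [n _ Az]; have [r r0 hr] := h n z Az; exists r => // w hw; exists n => //.
exact: hr.
Qed.

Lemma closedU A B : closedm A -> closedm B -> closedm (A `|` B).
Proof.
rewrite /closedm setCU => hA hB z [Az Bz].
have [r1 r10 h1] := hA z Az; have [r2 r20 h2] := hB z Bz.
exists (Num.min r1 r2); first by rewrite lt_min r10 r20.
move=> w hw; split; [apply: h1 | apply: h2]; apply: (ball_le z (Num.min r1 r2)) => //;
  by rewrite ge_min lexx ?orbT.
Qed.

Lemma closed0 : closedm set0.
Proof. by rewrite /closedm setC0 => z _; exists 1 => //. Qed.

Lemma closed_bigsetU (F : nat -> set X) n : (forall i, closedm (F i)) ->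
  closedm (\big[setU/set0]_(i < n) F i).
Proof.
move=> h; elim: n => [|n IH]; first by rewrite big_ord0; exact: closed0.
by rewrite big_ord_recr /=; apply: closedU.
Qed.

Lemma bor_bigsetU (A : nat -> set X) n : (forall i, bor (A i)) ->
  bor (\big[setU/set0]_(i < n) A i).
Proof.
move=> h; elim: n => [|n IH]; first by rewrite big_ord0; exact: bor0.
by rewrite big_ord_recr /=; apply: borU.
Qed.

Lemma inv_le_k (k : nat) : (k.+2%:R : R)^-1 <= (k.+1%:R)^-1.
Proof. by rewrite lef_pV2 ?posrE ?ltr0Sn // ler_nat. Qed.

Section Reg.
Variables (x0 : X) (R0 : R).
Let Bl := ball x0 R0.

Definition good (S : set X) := bor S /\ forall e, 0 < e -> exists F G,
  [/\ closedm F, mopen G, F `<=` S, S `<=` G & (mu ((G `\` F) `&` Bl) < e%:E)%E].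

Lemma good_open S : mopen S -> good S.
Proof.
move=> hS; split; first exact: bor_open.
move=> e e0.
pose F k := [set z | forall w, ~ S w -> (k.+1%:R)^-1 <= rho z w].
have Fc k : closedm (F k).
  move=> z /= hz.
  have [w [nSw hw]] : exists w, ~ S w /\ rho z w < (k.+1%:R)^-1.
    apply: contrapT => hn; apply: hz => w nSw; rewrite leNgt; apply/negP => hlt.
    by apply: hn; exists w.
  exists ((k.+1%:R)^-1 - rho z w); first by rewrite subr_gt0.
  move=> z'; rewrite /mball /= => hz' Fz'.
  have := Fz' w nSw; have := rho_tri z' z w; rewrite (rho_sym z' z); move=> h1 h2; rewrite ltrBrDr in hz'; by have := le_lt_trans (le_trans h2 h1) hz'; rewrite ltxx.
have FS k : F k `<=` S.
  move=> z Fz; apply: contrapT => nS; have := Fz z nS; rewrite rho_xx.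
  by rewrite leNgt invr_gt0 ltr0Sn.
pose C k := (S `\` F k) `&` Bl.
have Cm k : mu.-caratheodory (C k).
  apply: bmeas; apply: borI; last exact: bor_ball.
  by apply: borD; [exact: bor_open | exact: bor_closed].
have Cdec k : C k.+1 `<=` C k.
  move=> z [[Sz nF] Bz]; split => //; split => // Fz; apply: nF => w nSw.
  exact: le_trans (inv_le_k k) (Fz w nSw).
have Cfin : (mu (C 0%N) < +oo)%E by apply: (mu_fin _ x0 R0) => z [].
have Cempty : \bigcap_k C k = set0.
  apply/seteqP; split => // z hz.
  have [[Sz _] _] := hz 0%N I; have [r r0 hr] := hS z Sz.
  pose k := Num.Def.archi_bound (r^-1).
  have hk : r^-1 < k%:R by apply: archi_boundP; rewrite invr_ge0 ltW.
  have [[_ nF] _] := hz k I; apply: nF => w nSw.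
  have h1 : r <= rho z w.
    by rewrite leNgt; apply/negP => h; apply: nSw; apply: hr.
  apply: le_trans h1; rewrite invf_ple ?posrE ?ltr0Sn //.
  apply: ltW; apply: (lt_le_trans hk); by rewrite ler_nat.
have [N hN] := dec_cont R X x0 mu C e e0 Cm Cdec Cfin.
exists (F N), S; split => //.
by rewrite Cempty outer_measure0 add0e in hN.
Qed.

Lemma good_compl S : good S -> good (~` S).
Proof.
move=> [bS h]; split; first exact: borC.
move=> e e0; have [F [G [cF oG FS SG hm]]] := h e e0.
exists (~` G), (~` F); split.
- by rewrite /closedm setCK.
- exact: cF.
- exact: subsetC.
- exact: subsetC.
- by have -> : ~` F `\` ~` G = G `\` F by rewrite !setDE setCK setIC.
Qed.

Lemma good_bigcup (A : nat -> set X) : (forall i, good (A i)) -> good (\bigcup_i A i).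
Proof.
move=> hA; split; first by apply: bor_bigcup => i; case: (hA i).
move=> e e0; pose e2 := e / 2.
have e20 : 0 < e2 by rewrite divr_gt0.
have : forall i, exists FG : set X * set X, [/\ closedm FG.1, mopen FG.2,
    FG.1 `<=` A i, A i `<=` FG.2 &
    (mu ((FG.2 `\` FG.1) `&` Bl) < (e2 / (2 ^ i.+1)%:R)%:E)%E].
  move=> i; have [_ h] := hA i.
  have hp : 0 < (2 ^ i.+1)%:R :> R by rewrite ltr0n expn_gt0.
  have [F [G hFG]] := h _ (divr_gt0 e20 hp).
  by exists (F, G).
case/choice => FG hFG.
pose S := \bigcup_i A i.
pose C N := (S `\` \big[setU/set0]_(i < N) A i) `&` Bl.
have bA i : bor (A i) by case: (hA i).
have Cm k : mu.-caratheodory (C k).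
  apply: bmeas; apply: borI; last exact: bor_ball.
  apply: borD; first exact: bor_bigcup.
  exact: bor_bigsetU.
have Cdec k : C k.+1 `<=` C k.
  move=> z [[Sz nF] Bz]; split => //; split => // Fz; apply: nF.
  by rewrite big_ord_recr /=; left.
have Cfin : (mu (C 0%N) < +oo)%E by apply: (mu_fin _ x0 R0) => z [].
have Cempty : \bigcap_k C k = set0.
  apply/seteqP; split => // z hz.
  have [[[i _ Az] _] _] := hz 0%N I.
  have [[_ nF] _] := hz i.+1 I; apply: nF.
  by rewrite big_ord_recr /=; right.
have [N hN] := dec_cont R X x0 mu C e2 e20 Cm Cdec Cfin.
rewrite Cempty outer_measure0 add0e in hN.
pose F := \big[setU/set0]_(i < N) (FG i).1.
pose G := \bigcup_i (FG i).2.
exists F, G; split.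
- by apply: (closed_bigsetU (fun i => (FG i).1) N) => i; case: (hFG i).
- by apply: (open_bigcup (fun i => (FG i).2)) => i; case: (hFG i).
- rewrite /F -(bigcup_mkord N (fun i => (FG i).1)) => z [i _ Fz]; exists i => //.
  by case: (hFG i) => _ _ h _ _; exact: h.
- move=> z [i _ Az]; exists i => //; by case: (hFG i) => _ _ _ h _; exact: h.
have sub : (G `\` F) `&` Bl `<=`
    (\bigcup_i (((FG i).2 `\` (FG i).1) `&` Bl)) `|` C N.
  move=> z [[[i _ Gz] nFz] Bz].
  case: (pselect (S z)) => Sz; last first.
    left; exists i => //; split => //; split => // F1z; apply: Sz; exists i => //.
    by case: (hFG i) => _ _ h _ _; exact: h.
  case: (pselect (exists2 j, (j < N)%N & A j z)) => [[j jN Ajz]|nj].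
    left; exists j => //; split => //; split.
      by case: (hFG j) => _ _ _ h _; exact: h.
    move=> F1z; apply: nFz; rewrite /F -(bigcup_mkord N (fun i => (FG i).1)); by exists j.
  right; split => //; split => //; rewrite -bigcup_mkord => -[j jN Ajz].
  by apply: nj; exists j.
apply: (le_lt_trans (le_outer_measure mu _ _ sub)).
apply: (le_lt_trans (outer_measureU2 _ _ _)).
have -> : e = e2 + e2 by rewrite /e2; field.
have hsum : (mu (\bigcup_i (((FG i).2 `\` (FG i).1) `&` Bl)) <= e2%:E)%E.
  apply: (le_trans (outer_measure_sigma_subadditive _ _)).
  apply: le_trans (epsilon_trick0 xpredT (ltW e20)).
  apply: lee_nneseries => [i _ _|i _]; first exact: outer_measure_ge0.
  by case: (hFG i) => _ _ _ _ h; exact: ltW.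
rewrite EFinD; apply: (le_lt_trans (leeD2r _ hsum)); by rewrite lteD2lE.
Qed.

Lemma reg S : bor S -> good S.
Proof.
move=> bS; apply: bS; split; last exact: good_open.
split.
- by apply: good_open => z.
- by move=> A hA; rewrite setTD; exact: good_compl.
- exact: good_bigcup.
Qed.

Lemma inner_reg S e : bor S -> S `<=` Bl -> 0 < e ->
  exists F, [/\ closedm F, F `<=` S & (mu (S `\` F) < e%:E)%E].
Proof.
move=> bS SB e0; have [_ h] := reg S bS; have [F [G [cF oG FS SG hm]]] := h e e0.
exists F; split => //; apply: le_lt_trans hm; apply: le_outer_measure.
by move=> z [Sz nF]; split => //; [split => //; exact: SG | exact: SB].
Qed.

End Reg.

Definition sep (s : R) n (z : nat -> X) :=
  forall i j, (i < n)%N -> (j < n)%N -> i != j -> s <= rho (z i) (z j).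

Lemma disj_sum n (z : nat -> X) r : sep (2 * r) n z ->
  mu (\big[setU/set0]_(i < n) ball (z i) r) = (\sum_(i < n) mu (ball (z i) r))%E.
Proof.
move=> hs.
pose A i := if (i < n)%N then ball (z i) r else set0.
have mA i : mu.-caratheodory (A i).
  rewrite /A; case: ifP => _; [exact: (bmeas _ (bor_ball _ _)) | exact: (bmeas _ bor0)].
have tA : trivIset setT A.
  move=> i j _ _ [w []]; rewrite /A.
  case: ifP => hi; case: ifP => hj // hwi hwj.
  apply/eqP; apply: contrapT => /negP hij.
  have := hs i j hi hj hij.
  rewrite /mball /= in hwi hwj.
  have := rho_tri (z i) w (z j); rewrite (rho_sym w (z j)); lra.
have := caratheodory_additive mA tA n setT.
rewrite setTI.
have -> : \big[setU/set0]_(i < n) A i = \big[setU/set0]_(i < n) ball (z i) r.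
  by apply: eq_bigr => i _; rewrite /A ltn_ord.
move=> ->; by apply: eq_bigr => i _; rewrite setTI /A ltn_ord.
Qed.


Lemma net_bound (x0 : X) (R1 : R) (R1pos : 0 < R1) s : 0 < s <= 1 -> exists Nmax : nat, forall n (z : nat -> X),
  (forall i, (i < n)%N -> ball x0 R1 (z i)) -> sep s n z -> (n <= Nmax)%N.
Proof.
move=> /andP [s0 s1].
pose p := Num.Def.archi_bound ((2 * R1 + 1) * 2 / s).
have hp : (2 * R1 + 1) <= 2 ^+ p * (s / 2).
  have h1 : (2 * R1 + 1) * 2 / s < p%:R.
    have hq : (0:R) <= (2 * R1 + 1) * 2 / s.
      by rewrite divr_ge0 ?(ltW s0) // mulr_ge0 //; lra.
    exact: archi_boundP hq.
  have h2 : (p%:R : R) <= 2 ^+ p.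
    by rewrite -natrX ler_nat ltnW // ltn_expl.
  rewrite ltr_pdivrMr // in h1.
  have : (2 * R1 + 1) * 2 <= 2 ^+ p * s.
    apply: ltW; apply: (lt_le_trans h1); by rewrite ler_pM2r.
  rewrite mulrA; lra.
have s20 : 0 < s / 2 by rewrite divr_gt0.
pose V := mu (ball x0 (R1 + 1)).
have hR : 0 < R1 + 1 by lra.
have [Vpos _ Vfin] := hdb x0 (R1 + 1) hR.
pose v := fine V.
have hV : V = v%:E by rewrite /v fineK // ge0_fin_numE // ltW.
have v0 : 0 < v by rewrite -lte_fin -hV.
exists (Num.Def.archi_bound (K ^+ p)) => n z zB zs.
pose h i := fine (mu (ball (z i) (s / 2))).
have hh i : mu (ball (z i) (s / 2)) = (h i)%:E.
  exact: (mu_finE _ (z i) (s / 2)).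
have hVi i : (i < n)%N -> v <= K ^+ p * h i.
  move=> hi; rewrite -lee_fin EFinM -hh -hV.
  have sub : ball x0 (R1 + 1) `<=` ball (z i) (2 ^+ p * (s / 2)).
    apply: ball_sub; have := zB i hi; rewrite /mball /= rho_sym; lra.
  apply: (le_trans (le_outer_measure mu _ _ sub)); exact: dbl_iter.
have hsum : \sum_(i < n) h i <= v.
  rewrite -lee_fin -sumEFin -hV.
  have <- : \sum_(i < n) mu (ball (z i) (s / 2)) = \sum_(i < n) (h i)%:E.
    by apply: eq_bigr => i _; rewrite hh.
  rewrite -disj_sum; last by move=> i j hi hj hij; rewrite mulrC divfK //; exact: zs.
  apply: le_outer_measure; rewrite -(bigcup_mkord n (fun i => ball (z i) (s / 2))) => y [i /= hi hy].
  rewrite /mball /=; apply: (le_lt_trans (rho_tri x0 (z i) y)).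
  have := zB i hi; rewrite /mball /= in hy *; lra.
have hn : (n%:R : R) * v <= K ^+ p * v.
  apply: (@le_trans _ _ (\sum_(i < n) (K ^+ p * h i))).
    have -> : (n%:R : R) * v = \sum_(i < n) v by rewrite sumr_const card_ord mulr_natl.
    by apply: ler_sum => i _; exact: hVi.
  by rewrite -mulr_sumr; apply: ler_wpM2l => //; rewrite exprn_ge0 // ltW.
have hn2 : (n%:R : R) <= K ^+ p by rewrite -(ler_pM2r v0).
have := archi_boundP (exprn_ge0 p (ltW Kpos)).
move=> h3; rewrite -(ler_nat R); apply: ltW; exact: le_lt_trans hn2 h3.
Qed.


Lemma net_exists (x0 : X) (R1 : R) (R1pos : 0 < R1) s (hs : 0 < s <= 1)
  (A' : set X) : A' `<=` ball x0 R1 ->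
  exists n (z : nat -> X), [/\ forall i, (i < n)%N -> A' (z i), sep s n z &
    forall a, A' a -> exists2 i, (i < n)%N & rho (z i) a < s].
Proof.
move=> hA'.
have [Nmax hN] := net_bound x0 R1 R1pos s hs.
pose P n := `[< exists z : nat -> X, (forall i, (i < n)%N -> A' (z i)) /\ sep s n z >].
have exP : exists n, P n.
  by exists 0%N; apply/asboolP; exists (fun _ => x0); split.
have ubP : forall n, P n -> (n <= Nmax)%N.
  move=> n /asboolP [z [hz hs']]; apply: (hN n z) => // i hi; apply: hA'; exact: hz.
case: (ex_maxnP exP ubP) => m /asboolP [z [hz hs']] hmax.
exists m, z; split => // a Aa.
apply: contrapT => hn.
have ge j : (j < m)%N -> s <= rho (z j) a.
  by move=> hj; rewrite leNgt; apply/negP => h; apply: hn; exists j.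
have : P m.+1.
  apply/asboolP; exists (fun i => if i == m then a else z i); split.
    move=> i hi /=; case: eqP => // /eqP him; apply: hz.
    by rewrite ltnS in hi; rewrite ltn_neqAle him hi.
  move=> i j hi hj hij /=; move: hi hj; rewrite !ltnS => hi hj.
  case: (eqVneq i m) => [eim|him]; case: (eqVneq j m) => [ejm|hjm].
  - by move: hij; rewrite eim ejm eqxx.
  - rewrite rho_sym; apply: ge; by rewrite ltn_neqAle hjm hj.
  - apply: ge; by rewrite ltn_neqAle him hi.
  - by apply: hs' => //; rewrite ltn_neqAle ?him ?hjm ?hi ?hj.
by move/hmax; rewrite ltnn.
Qed.

Lemma core (x0 : X) (R1 : R) (R1pos : 0 < R1) (c s1 : R) (c0 : 0 <= c)
  (cK : c * K <= 1 / 4) (s1pos : 0 < s1) (A : set X) :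
  A `<=` ball x0 R1 ->
  (forall z s, A z -> 0 < s -> s < s1 ->
     (mu (ball z s `&` A) <= c%:E * mu (ball z s))%E) -> mu A = 0%E.
Proof.
move=> AB hA.
have Afin := mu_finE A x0 R1 AB.
set a := fine (mu A) in Afin.
have a0 : 0 <= a by apply: fine_ge0; exact: outer_measure_ge0.
rewrite Afin; case: (eqVneq a 0) => [->//|an0].
have apos : 0 < a by rewrite lt0r an0 a0.
exfalso.
have [H [bH AH muH]] := hreg.2 A.
pose H' := H `&` ball x0 R1.
have bH' : bor H' by apply: borI => //; exact: bor_ball.
have AH' : A `<=` H' by move=> y Ay; split; [exact: AH | exact: AB].
have H'B : H' `<=` ball x0 R1 by move=> y [].
have muH' : mu H' = mu A.
  apply/eqP; rewrite eq_le; apply/andP; split.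
    by rewrite -muH; apply: le_outer_measure => y [].
  exact: le_outer_measure.
have a4 : 0 < a / 4 by rewrite divr_gt0.
have [F [cF FH hF]] := inner_reg x0 R1 H' (a / 4) bH' H'B a4.
pose A' := A `&` F.
have hA' : (a%:E <= mu A' + (a / 4)%:E)%E.
  rewrite -Afin; apply: (le_trans (@le_outer_measureIC _ _ mu F A)).
  rewrite -/A'.
  apply: leeD2l; apply: ltW; apply: le_lt_trans hF; apply: le_outer_measure.
  by move=> y [Ay nFy]; split => //; exact: AH'.
pose N k := [set y | exists2 w, F w & rho w y < (k.+1%:R)^-1] `&` ball x0 (R1 + 1).
have Nopen k : mopen [set y | exists2 w, F w & rho w y < (k.+1%:R)^-1].
  move=> y [w Fw hw]; exists ((k.+1%:R)^-1 - rho w y); first by rewrite subr_gt0.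
  move=> y' hy'; exists w => //; rewrite /mball /= in hy'.
  apply: le_lt_trans (rho_tri w y y') _; by rewrite addrC -ltrBrDr.
have Nm k : mu.-caratheodory (N k).
  by apply: bmeas; apply: borI; [exact: bor_open | exact: bor_ball].
have Ndec k : N k.+1 `<=` N k.
  move=> y [[w Fw hw] hb]; split => //; exists w => //.
  exact: lt_le_trans hw (inv_le_k k).
have Nfin : (mu (N 0%N) < +oo)%E by apply: (mu_fin _ x0 (R1 + 1)) => y [].
have Ncap : \bigcap_k N k `<=` F.
  move=> y hy; apply: contrapT => nFy.
  have [r r0 hr] := cF y nFy.
  pose k := Num.Def.archi_bound (r^-1).
  have hk : r^-1 < k%:R by apply: archi_boundP; rewrite invr_ge0 ltW.
  have [[w Fw hw] _] := hy k I.
  apply: (hr w _ Fw); rewrite /mball /= rho_sym; apply: lt_le_trans hw _.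
  rewrite invf_ple ?posrE ?ltr0Sn //.
  apply: ltW; apply: (lt_le_trans hk); by rewrite ler_nat.
have [k hk] := dec_cont R X x0 mu N (a / 4) a4 Nm Ndec Nfin.
have hNk : (mu (N k) < (a + a / 4)%:E)%E.
  apply: lt_le_trans hk _; rewrite EFinD leeD2r // -Afin -muH'.
  by apply: le_outer_measure => y hy; apply: FH; exact: Ncap.
pose s := Num.min (s1 / 2) ((k.+1%:R)^-1).
have kp : 0 < (k.+1%:R : R)^-1 by rewrite invr_gt0 ltr0Sn.
have k1 : (k.+1%:R : R)^-1 <= 1 by rewrite invf_le1 ?ltr0Sn // ler1n.
have s0 : 0 < s by rewrite lt_min kp divr_gt0.
have ss1 : s < s1 by rewrite gt_min ltr_pdivrMr //; apply/orP; left; lra.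
have sk : s <= (k.+1%:R)^-1 by rewrite ge_min lexx orbT.
have sle1 : s <= 1 by apply: le_trans sk k1.
have A'B : A' `<=` ball x0 R1 by move=> y [Ay _]; exact: AB.
have hs01 : 0 < s <= 1 by rewrite s0 sle1.
have [n [z [zA zs zc]]] := net_exists x0 R1 R1pos s hs01 A' A'B.
have s20 : 0 < s / 2 by rewrite divr_gt0.
have s2 : 2 * (s / 2) = s by rewrite mulrC divfK.
have h1 : (mu A' <= \sum_(i < n) mu (ball (z i) s `&` A'))%E.
  apply: le_trans _ (@outer_measure_subadditive _ _ mu (fun i => ball (z i) s `&` A') n).
  apply: le_outer_measure; rewrite -(bigcup_mkord n (fun i => ball (z i) s `&` A')).
  move=> y hy; have [i hi hz] := zc y hy; by exists i.
have h2 : (\sum_(i < n) mu (ball (z i) s `&` A') <=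
    \sum_(i < n) ((c * K)%:E * mu (ball (z i) (s / 2))))%E.
  apply: lee_sum => i _.
  have zi : A (z i) by case: (zA i (ltn_ord i)).
  apply: le_trans (le_outer_measure mu (ball (z i) s `&` A') (ball (z i) s `&` A) _) _.
    by move=> y [b [Ay _]].
  apply: le_trans (hA (z i) s zi s0 ss1) _.
  rewrite EFinM -muleA; apply: lee_wpmul2l; first by rewrite lee_fin.
  rewrite -[X in mu (ball _ X)]s2; exact: dbl.
have h3 : (\sum_(i < n) ((c * K)%:E * mu (ball (z i) (s / 2))) =
    (c * K)%:E * mu (\big[setU/set0]_(i < n) ball (z i) (s / 2)))%E.
  rewrite disj_sum; last by rewrite s2.
  by rewrite ge0_sume_distrr // => i _; exact: outer_measure_ge0.
have h4 : (mu (\big[setU/set0]_(i < n) ball (z i) (s / 2)) <= mu (N k))%E.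
  apply: le_outer_measure; rewrite -(bigcup_mkord n (fun i => ball (z i) (s / 2))).
  move=> y [i /= hi hy]; rewrite /mball /= in hy.
  have [zAi zFi] := zA i hi.
  split; first by exists (z i) => //; apply: lt_le_trans sk; lra.
  rewrite /mball /=; apply: (le_lt_trans (rho_tri x0 (z i) y)).
  have := AB _ zAi; rewrite /mball /= => h; lra.
have hfin := mu_finE A' x0 R1 A'B.
have cK0 : 0 <= c * K by rewrite mulr_ge0 // ltW.
have h5 : (mu A' <= (c * K)%:E * (a + a / 4)%:E)%E.
  apply: le_trans h1 _; apply: le_trans h2 _; rewrite h3.
  apply: lee_wpmul2l; first by rewrite lee_fin.
  exact: le_trans h4 (ltW hNk).
move: hA' h5; rewrite hfin -EFinD -EFinM !lee_fin.
set a' := fine (mu A'); set q := c * K in cK cK0 *.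
move=> hA' h5; nra.
Qed.

Lemma part2 d (d0 : 0 <= d) (dK : d * K ^+ 2 * K <= 1 / 4)
  (E : set X) (x : X) (B : X -> set X) :
  E !=set0 ->
  mu_interior_point rho mu (metric_closure rho E) x ->
  (exists2 xi : R, 0 < xi &
     forall z, metric_closure rho E z -> z <> x -> rho z x < xi ->
       exists l eta : R, [/\ 0 < l, 0 < eta &
         forall y, E y -> mball rho z l y ->
           full_at rho mu d eta (B y) y]) ->
  exists U : set X, exists rx : X -> X,
    [/\ mu_neighborhood rho mu U x,
        (forall y, U y -> E (rx y)) &
        (forall y, U y -> y <> x -> B (rx y) y)].
Proof.
move=> [e0 Ee0] [clx [B0 [bB0 B0cl hdens]]] [xi xi0 hxi].
pose A := [set z | [/\ B0 z, rho z x < xi, z <> x & forall e, E e -> ~ B e z]].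
pose c := d * K ^+ 2.
have c0 : 0 <= c by rewrite mulr_ge0 // exprn_ge0 // ltW.
have loc z : A z -> exists2 s1, 0 < s1 & forall s, 0 < s -> s < s1 ->
    (mu (ball z s `&` A) <= c%:E * mu (ball z s))%E.
  move=> [B0z zx znx nB].
  have [l [eta [l0 eta0 hf]]] := hxi z (B0cl z B0z) znx zx.
  exists (Num.min l (eta / 2)); first by rewrite lt_min l0 divr_gt0.
  move=> s s0; rewrite lt_min => /andP [sl se].
  have s2eta : 2 * s < eta by rewrite -ltr_pdivlMl // mulrC.
  have [e Ee hze] := B0cl z B0z s s0.
  have [_ _ fe] := hf e Ee (lt_trans hze sl).
  have t0 : 0 < 2 * s by rewrite mulr_gt0.
  have r1 : (mu (ball e (2 * s) `\` B e) <= d%:E * mu (ball e (2 * s)))%E.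
    by apply: ratio_le => //; apply: fe; rewrite t0 s2eta.
  have sub1 : ball z s `&` A `<=` ball e (2 * s) `\` B e.
    move=> y [hy [_ _ _ nBy]]; split; last exact: nBy.
    apply: (ball_sub e z) hy; rewrite rho_sym; lra.
  have sub2 : ball e (2 * s) `<=` ball z (2 ^+ 2 * s).
    apply: ball_sub; rewrite expr2; lra.
  apply: le_trans (le_outer_measure mu _ _ sub1) _.
  apply: le_trans r1 _.
  rewrite /c EFinM -muleA; apply: lee_wpmul2l; first by rewrite lee_fin.
  apply: le_trans (le_outer_measure mu _ _ sub2) _; exact: dbl_iter.
pose An n := A `&` [set z | forall s, 0 < s -> s < (n.+1%:R)^-1 ->
    (mu (ball z s `&` A) <= c%:E * mu (ball z s))%E].
have An0 n : mu (An n) = 0%E.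
  have np : 0 < (n.+1%:R : R)^-1 by rewrite invr_gt0 ltr0Sn.
  apply: (core x xi xi0 c ((n.+1%:R)^-1) c0 dK np (An n)).
    by move=> z [[_ zx _ _] _]; rewrite /mball /= rho_sym.
  move=> z s [Az hz] s0 ss1.
  apply: le_trans (hz s s0 ss1); apply: le_outer_measure => y [hy [Ay _]]; by split.
have Acov : A `<=` \bigcup_n An n.
  move=> z Az; have [s1 s10 hs1] := loc z Az.
  pose k := Num.Def.archi_bound (s1^-1).
  have hk : s1^-1 < k%:R by apply: archi_boundP; rewrite invr_ge0 ltW.
  exists k => //; split => // s s0 sk; apply: hs1 => //.
  apply: lt_le_trans sk _; rewrite invf_ple ?posrE ?ltr0Sn //.
  apply: ltW; apply: (lt_le_trans hk); by rewrite ler_nat.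
have muA : mu A = 0%E.
  apply/eqP; rewrite eq_le outer_measure_ge0 andbT.
  apply: le_trans (le_outer_measure mu _ _ Acov) _.
  apply: le_trans (outer_measure_sigma_subadditive mu An) _.
  by rewrite eseries0.
have [H [bH AH muH]] := hreg.2 A.
rewrite muA in muH.
pose U := [set y | y = x \/ exists e, E e /\ B e y].
pose rx := fun y => if pselect (exists e, E e /\ B e y) is left h then projT1 (cid h) else e0.
exists U, rx; split.
- split; first by left.
  exists ((B0 `&` ball x xi) `\` H); split.
  + by apply: borD => //; apply: borI => //; exact: bor_ball.
  + move=> y [[B0y bxy] nHy].
    case: (pselect (y = x)) => [->|ynx]; first by left.
    right; apply: contrapT => ne; apply: nHy; apply: AH; split => //.
      by rewrite rho_sym.
    by move=> e Ee Bey; apply: ne; exists e.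
  + have hn : \forall r \near 0^'+, 0 <= density_ratio rho mu
        ((B0 `&` ball x xi) `\` H) x r <= density_ratio rho mu B0 x r.
      near=> r.
    have r0 : 0 < r by near: r; exact: nbhs_right_gt.
    have rxi : r < xi by near: r; exact: nbhs_right_lt.
    have [mpos _ _] := hdb x r r0.
    have hb : ball x r `<=` ball x r by [].
    have f1 : ball x r `\` ((B0 `&` ball x xi) `\` H) `<=` ball x r by move=> y [].
    have f2 : ball x r `\` B0 `<=` ball x r by move=> y [].
    rewrite /density_ratio; rewrite (mu_finE _ _ _ hb) lte_fin in mpos.
    apply/andP; split.
      by apply: divr_ge0; apply: fine_ge0; exact: outer_measure_ge0.
    rewrite ler_pM2r ?invr_gt0 //.
    rewrite -lee_fin -(mu_finE _ _ _ f1) -(mu_finE _ _ _ f2).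
    have sub : ball x r `\` ((B0 `&` ball x xi) `\` H) `<=` (ball x r `\` B0) `|` H.
      move=> y [byr nB]; case: (pselect (B0 y)) => B0y; last by left.
      right; apply: contrapT => nHy; apply: nB; split => //; split => //.
      apply: (ball_le x r) => //; exact: ltW.
    apply: le_trans (le_outer_measure mu _ _ sub) _.
    by apply: le_trans (outer_measureU2 _ _ _) _; rewrite muH adde0.
    apply: (squeeze_cvgr (f := fun _ => 0) hn). - by apply/cvgrPdist_lt => eps eps0; near=> t; rewrite subrr normr0. - exact: hdens.
- move=> y Uy; rewrite /rx; case: pselect => [h|_] //.
  by case: (projT2 (cid h)).
- move=> y [->|[e [Ee Bey]]] ynx //.
  rewrite /rx; case: pselect => [h|nh]; first by case: (projT2 (cid h)).
  by exfalso; apply: nh; exists e.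
Unshelve. all: by end_near.
Qed.

End Main.

Theorem lemma2p7 (R : realType) (K : R) : 0 < K ->
  exists delta : R, 0 < delta /\
  forall (X : Type) (rho : X -> X -> R) (mu : {outer_measure set X -> \bar R}),
    doubling_mms rho mu K ->
    (* (1) *)
    (forall (x y : X) (eta : R) (Bx By : set X),
        0 < eta -> full_at rho mu delta eta Bx x ->
        full_at rho mu delta eta By y ->
        0 < rho x y -> rho x y < eta / 3 ->
        (0 < mu (mball rho x (3 * rho x y) `&` Bx
                 `&` mball rho y (3 * rho x y) `&` By))%E) /\
    (* (2) *)
    (forall (E : set X) (x : X) (B : X -> set X),
        E !=set0 ->
        mu_interior_point rho mu (metric_closure rho E) x ->
        (forall y, E y -> mu_measurable mu (B y)) ->
        (exists2 xi : R, 0 < xi &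
           forall z, metric_closure rho E z -> z <> x -> rho z x < xi ->
             exists l eta : R, [/\ 0 < l, 0 < eta &
               forall y, E y -> mball rho z l y ->
                 full_at rho mu delta eta (B y) y]) ->
        exists U : set X, exists rx : X -> X,
          [/\ mu_neighborhood rho mu U x,
              (forall y, U y -> E (rx y)) &
              (forall y, U y -> y <> x -> B (rx y) y)]).
Proof.
move=> K0.
pose u := 1 + K.
have u1 : 1 < u by rewrite /u; lra.
have u3 : 0 < 4 * u ^+ 3 by rewrite mulr_gt0 // exprn_gt0 //; lra.
pose d := (4 * u ^+ 3)^-1.
have dpos : 0 < d by rewrite invr_gt0.
have d0 : 0 <= d by exact: ltW.
have dK1 : d * (1 + K) < 1.
  rewrite -/u mulrC ltr_pdivrMr // mul1r.
  rewrite !exprS expr0 mulr1; nra.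
have dK2 : d * K ^+ 2 * K <= 1 / 4.
  rewrite -mulrA -exprSr mulrC ler_pdivrMr //. rewrite /u !exprS expr0 !mulr1; nra.
exists d; split => // X rho mu [_ hmet _ hreg hdb].
split.
- move=> x y eta Bx By eta0 fx fy t0 teta.
  by eapply part1; eassumption.
- move=> E x B hE hint hmeas hxi.
  by eapply (@part2 R X rho mu K); eassumption.
Qed.
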